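(* Let $\mathbf{A}\in\mathbb{R}^{n\times d}$ with $\mathrm{diag}(\mathbf{A}^T\mathbf{A})=\mathbf{1}$, let $\hat{\mathbf{A}}=[\mathbf{A},-\mathbf{A}]\in\mathbb{R}^{n\times 2d}$ with rows $\hat{\mathbf{a}}_i$, let $y_1,\dots,y_n$ be observations, $\lambda\ge0$, $L$ a non-negative convex loss, and $$F(\mathbf{x})=\sum_{i=1}^n L(\hat{\mathbf{a}}_i^T\mathbf{x},y_i)+\lambda\sum_{j=1}^{2d}x_j,\qquad\mathbf{x}\in\mathbb{R}^{2d}_+.$$ Assume $F$ is convex and there is $\beta>0$ such that for all $\mathbf{x}$ and parallel updates $\Delta\mathbf{x}$ (with $\mathbf{x},\mathbf{x}+\Delta\mathbf{x}\in\mathbb{R}^{2d}_+$), $F(\mathbf{x}+\Delta\mathbf{x})\le F(\mathbf{x})+\Delta\mathbf{x}^T\nabla F(\mathbf{x})+\tfrac{\beta}{2}\Delta\mathbf{x}^T\hat{\mathbf{A}}^T\hat{\mathbf{A}}\Delta\mathbf{x}$. Let $\rho$ be the spectral radius of $\hat{\mathbf{A}}^T\hat{\mathbf{A}}$ and let $P$ be a positive integer with $P<\tfrac{2d}{\rho}+1$. Fix $\mathbf{x}\in\mathbb{R}^{2d}_+$, and for each $j\in\{1,\dots,2d\}$ let $\delta x_j=\max\{-x_j,-(\nabla F(\mathbf{x}))_j/\beta\}$. Let $\mathcal{P}_t$ be a multiset of $P$ indices drawn independently and uniformly from $\{1,\dots,2d\}$, let $\Delta\mathbf{x}$ be the collective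 update $(\Delta\mathbf{x})_k=\sum_{i_j\in\mathcal{P}_t:\,i_j=k}\delta x_{i_j}$, and assume $\mathbf{x}+\Delta\mathbf{x}\in\mathbb{R}^{2d}_+$. Then $$\mathbb{E}_{\mathcal{P}_t}\big[F(\mathbf{x}+\Delta\mathbf{x})-F(\mathbf{x})\big]\le P\,\mathbb{E}_j\Big[\delta x_j(\nabla F(\mathbf{x}))_j+\tfrac{\beta}{2}\Big(1+\tfrac{(P-1)\rho}{2d}\Big)(\delta x_j)^2\Big],$$ where $\mathbb{E}_{\mathcal{P}_t}$ is over the random choice of $\mathcal{P}_t$ and $\mathbb{E}_j$ is over $j$ chosen uniformly at random from $\{1,\dots,2d\}$.
   Context: This is one iteration of Shotgun (parallel stochastic coordinate descent) from the point $\mathbf{x}$: $P$ indices are drawn independently and uniformly, each chosen coordinate receives the Shooting update $\delta x_j$ computed at the same point $\mathbf{x}$, and all are applied simultaneously. Spectral radius means the maximum absolute eigenvalue. (The paper's ''$\mathbf{A}^T\mathbf{A}$'' here acts on the $2d$ duplicated coordinates, i.e. is $\hat{\mathbf{A}}^T\hat{\mathbf{A}}$.) *)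

(* Defs.v *)
From HB Require Import structures.
From mathcomp Require Import all_boot all_order all_algebra.
From mathcomp Require Import all_classical all_reals all_analysis.
Set Implicit Arguments. Unset Strict Implicit. Unset Printing Implicit Defensive.
Import Order.TTheory GRing.Theory Num.Theory.
Import numFieldNormedType.Exports.
Local Open Scope ring_scope.

Section Shotgun.
Variable R : realType.

Definition dupmx n d (A : 'M[R]_(n, d)) : 'M[R]_(n, d + d) := row_mx A (- A).

Definition lassoF n d (A : 'M[R]_(n, d)) (L : R -> R -> R) (y : 'I_n -> R)
  (lam : R) (x : 'cV[R]_(d + d)) : R :=
  \sum_(i < n) L ((dupmx A *m x) i ord0) (y i) + lam * \sum_(j < d + d) x j ord0.

Definition gradF m (F : 'cV[R]_m -> R) (x : 'cV[R]_m) : 'cV[R]_m :=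
  \col_(j < m) derive1 (fun t : R => F (x + t *: delta_mx j ord0)) 0.

Definition nonneg_vec m (x : 'cV[R]_m) : Prop := forall j, 0 <= x j ord0.

(* spectral radius = max |eigenvalue| (eigenvalues in R; the matrix used is
   symmetric, so all its eigenvalues are real) *)
Definition is_spectral_radius m (M : 'M[R]_m) (rho : R) : Prop :=
  (exists a, eigenvalue M a /\ `|a| = rho) /\
  (forall a, eigenvalue M a -> `|a| <= rho).

Definition shoot m (F : 'cV[R]_m -> R) (beta : R) (x : 'cV[R]_m) (j : 'I_m) : R :=
  Num.max (- x j ord0) (- (gradF F x) j ord0 / beta).

Definition collective m P (F : 'cV[R]_m -> R) (beta : R) (x : 'cV[R]_m)
  (s : {ffun 'I_P -> 'I_m}) : 'cV[R]_m :=
  \col_(k < m) \sum_(p < P | s p == k) shoot F beta x (s p).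

End Shotgun.

(* Main.v *)
Require Import Defs.
From HB Require Import structures.
From mathcomp Require Import all_boot all_order all_algebra.
From mathcomp Require Import all_classical all_reals all_analysis.
From mathcomp Require Import ring lra.
Import Order.TTheory GRing.Theory Num.Theory.
Import numFieldNormedType.Exports.
Local Open Scope ring_scope.

Section Ray.
Set Implicit Arguments. Unset Strict Implicit.
Variable R : realType.
Variable m : nat.
Implicit Types (M : 'M[R]_m) (u v w : 'rV[R]_m).

Definition Bf M u w : R := (u *m M *m w^T) 0 0.

Lemma BfDl M u v w : Bf M (u + v) w = Bf M u w + Bf M v w.
Proof. by rewrite /Bf !mulmxDl mxE. Qed.
Lemma BfDr M u v w : Bf M w (u + v) = Bf M w u + Bf M w v.
Proof. by rewrite /Bf raddfD /= mulmxDr mxE. Qed.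
Lemma BfZl M t u w : Bf M (t *: u) w = t * Bf M u w.
Proof. by rewrite /Bf -!scalemxAl mxE. Qed.
Lemma BfZr M t u w : Bf M w (t *: u) = t * Bf M w u.
Proof. by rewrite /Bf linearZ /= -scalemxAr mxE. Qed.
Lemma Bf_sym M u w : M^T = M -> Bf M u w = Bf M w u.
Proof.
move=> sM; rewrite /Bf -[in LHS](trmxK (u *m M *m w^T)) mxE.
by rewrite !trmx_mul trmxK sM mulmxA.
Qed.
Lemma Bf1E v : Bf 1%:M v v = \sum_j v 0 j ^+ 2.
Proof. by rewrite /Bf mulmx1 mxE; apply: eq_bigr => j _; rewrite mxE expr2. Qed.
Lemma Bf1_ge0 v : 0 <= Bf 1%:M v v.
Proof. by rewrite Bf1E sumr_ge0 // => j _; rewrite sqr_ge0. Qed.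
Lemma Bf1_eq0 v : Bf 1%:M v v = 0 -> v = 0.
Proof.
rewrite Bf1E => /eqP; rewrite psumr_eq0 => [/allP H|j _]; last by rewrite sqr_ge0.
apply/rowP => j; rewrite mxE; apply/eqP; rewrite -sqrf_eq0.
by have := H j; rewrite mem_index_enum => /(_ isT).
Qed.


Lemma Bf_cont M : continuous (fun v : 'rV[R]_m => Bf M v v).
Proof.
have cs : forall (I : eqType) (s : seq I) (f : I -> 'rV[R]_m -> R),
    (forall i, continuous (f i)) -> continuous (fun v => \sum_(i <- s) f i v).
  move=> I s f fc; elim: s => [|i s IH] x.
    by under eq_fun do rewrite big_nil; exact: cst_continuous.
  under eq_fun do rewrite big_cons.
  exact: (@continuousD R R^o _ (f i) (fun v => \sum_(j <- s) f j v) x (fc i x) (IH x)).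
rewrite /Bf; under eq_fun do rewrite mxE.
apply: (cs) => j; under eq_fun do rewrite !mxE.
move=> x; apply: continuousM; last exact: coord_continuous.
apply: (cs) => i y; apply: continuousM; first exact: coord_continuous.
exact: cst_continuous.
Qed.

Lemma quad0 (a b : R) : 0 <= a -> (forall t, 0 <= - 2 * t * b + t ^+ 2 * a) -> b = 0.
Proof.
move=> a0 H; have := H (b / (a + 1)).
have a1 : 0 < a + 1 by lra.
set t := b / (a + 1).
have tE : t * (a + 1) = b by rewrite /t mulfVK // gt_eqF.
rewrite -tE => h.
have h2 : t ^+ 2 * (a + 2) <= 0 by nra.
have : t ^+ 2 <= 0.
  rewrite -(@ler_pM2r _ (a + 2)) ?mul0r //; lra.
move=> h3; have t0 : t = 0.
  apply/eqP; rewrite -sqrf_eq0 eq_le h3 sqr_ge0 //.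
by rewrite t0 mul0r.
Qed.

Local Notation nn v := (Bf 1%:M v v).

Lemma Bf0 M : Bf M 0 0 = 0.
Proof. by rewrite /Bf !mul0mx mxE. Qed.

Lemma Bf_scale_unit M v : v != 0 ->
  let r := Num.sqrt (nn v) in
  nn (r^-1 *: v) = 1 /\ Bf M v v = nn v * Bf M (r^-1 *: v) (r^-1 *: v).
Proof.
move=> vn0 r.
have n0 : 0 < nn v.
  rewrite lt_def Bf1_ge0 andbT; apply/eqP => h; move: vn0; rewrite (Bf1_eq0 h) eqxx //.
have r0 : 0 < r by rewrite /r sqrtr_gt0.
have rr : r * r = nn v by rewrite -expr2 sqr_sqrtr // ltW.
rewrite !BfZl !BfZr; split.
  by rewrite -rr; field; rewrite gt_eqF.
by rewrite -rr; field; rewrite gt_eqF.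
Qed.

Lemma rayleigh M rho : M^T = M -> (forall a, eigenvalue M a -> `|a| <= rho) ->
  forall v, Bf M v v <= rho * nn v.
Proof.
move=> sM Hr v.
have [->|vn0] := eqVneq v 0; first by rewrite !Bf0 mulr0.
pose S := [set u : 'rV[R]_m | nn u = 1]%classic.
have S0 : (S !=set0)%classic.
  by exists ((Num.sqrt (nn v))^-1 *: v); rewrite /S /=; case: (Bf_scale_unit M vn0).
have cS : compact S.
  apply: bounded_closed_compact; last first.
    have -> : S = ((fun u => nn u) @^-1` [set x | x = 1])%classic by [].
    apply: preimage_closed; last exact: closed_eq.
    by move=> x _; apply: Bf_cont.
  exists 1; split => // M0 M01 u /= Su.
  rewrite [X in X <= _]/Num.norm /= mx_normrE; apply: bigmax_le => [|[i j] _ /=]; first by apply: le_trans (ltW M01).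
  rewrite ord1.
  have : u 0 j ^+ 2 <= 1.
    rewrite -Su Bf1E (bigD1 j) //= lerDl sumr_ge0 // => k _; exact: sqr_ge0.
  move=> h; apply: (@le_trans _ _ 1); last exact: ltW.
  rewrite ler_norml; apply/andP; split; nra.
have [c cSc cmax] := compact_EVT_max S0 cS (continuous_subspaceT (@Bf_cont M)).
move: cSc; rewrite inE /S /= => nc.
set l := Bf M c c.
have key : forall u, Bf M u u <= l * nn u.
  move=> u; have [->|un0] := eqVneq u 0; first by rewrite !Bf0 mulr0.
  have [h1 h2] := Bf_scale_unit M un0.
  rewrite h2 mulrC ler_wpM2r ?Bf1_ge0 //.
  by apply: cmax; rewrite inE.
have [e eE] : {e | e = c *m M - l *: c} by eexists.
have s1 : (1%:M : 'M[R]_m)^T = 1%:M by rewrite trmx1.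
have b0 : Bf M e c - l * Bf 1%:M e c = 0.
  apply: (@quad0 (l * nn e - Bf M e e)); first by rewrite subr_ge0 key.
  move=> t; have := key (c + t *: e).
  rewrite !(BfDl, BfDr, BfZl, BfZr) (Bf_sym c e sM) (Bf_sym c e s1) nc -/l.
  rewrite -subr_ge0 => h; apply: le_trans h _.
  rewrite le_eqVlt; apply/orP; left; apply/eqP; ring.
have e0 : e = 0.
  apply: Bf1_eq0; rewrite -b0.
  have eT : e^T = M *m c^T - l *: c^T by rewrite eE raddfB /= trmx_mul sM linearZ.
  have sub00 : forall (A B : 'M[R]_1) (k : R), (A - k *: B) 0 0 = A 0 0 - k * B 0 0.
    by move=> A B k; rewrite !mxE.
  by rewrite /Bf !mulmx1 eT mulmxBr mulmxA -scalemxAr sub00.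
have ev : eigenvalue M l.
  apply/eigenvalueP; exists c; first by apply/eqP; rewrite -subr_eq0 -eE e0.
  by apply/eqP => c0; move: nc; rewrite c0 Bf0 => /eqP; rewrite eq_sym oner_eq0.
apply: (le_trans (key v)); rewrite ler_wpM2r ?Bf1_ge0 //.
exact: le_trans (ler_norm l) (Hr _ ev).
Qed.

End Ray.

Section Cnt.
Set Implicit Arguments. Unset Strict Implicit.
Variable R : realType.
Variables P m : nat.

Lemma sum_ffun_prod (F : 'I_P -> 'I_m -> R) :
  \sum_(s : {ffun 'I_P -> 'I_m}) \prod_i F i (s i) = \prod_i \sum_j F i j.
Proof. by rewrite bigA_distr_bigA. Qed.

Lemma sum_ind (j : 'I_m) : \sum_(l < m) (l == j)%:R = 1 :> R.
Proof.
rewrite (bigD1 j) //= eqxx big1 ?addr0 // => l /negbTE ->; by [].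
Qed.

Lemma sum_one : \sum_(l < m) 1 = m%:R :> R.
Proof. by rewrite sumr_const card_ord. Qed.

Lemma prod_const_m : \prod_(i < P) (m%:R : R) = m%:R ^+ P.
Proof. by rewrite prodr_const card_ord. Qed.

Lemma count_ind1 (p : 'I_P) (j : 'I_m) :
  m%:R * \sum_(s : {ffun 'I_P -> 'I_m}) (s p == j)%:R = m%:R ^+ P :> R.
Proof.
pose F i l : R := if i == p then (l == j)%:R else 1.
have -> : \sum_(s : {ffun 'I_P -> 'I_m}) (s p == j)%:R
          = \sum_(s : {ffun 'I_P -> 'I_m}) \prod_i F i (s i).
  apply: eq_bigr => s _; rewrite (bigD1 p) //= big1 ?mulr1 /F ?eqxx //.
  by move=> i /negbTE ->.
rewrite sum_ffun_prod (bigD1 p) //= {1}/F eqxx sum_ind mul1r.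
rewrite -prod_const_m [in RHS](bigD1 p) //=; congr (_ * _).
by apply: eq_bigr => i /negbTE ip; rewrite /F ip sum_one.
Qed.

Lemma count_ind2 (p q : 'I_P) (j k : 'I_m) : p != q ->
  m%:R ^+ 2 * \sum_(s : {ffun 'I_P -> 'I_m}) ((s p == j)%:R * (s q == k)%:R)
  = m%:R ^+ P :> R.
Proof.
move=> pq; have qp : (q == p) = false by rewrite eq_sym (negbTE pq).
pose F i l : R := if i == p then (l == j)%:R else if i == q then (l == k)%:R else 1.
have split2 : forall G : 'I_P -> R, \prod_i G i
    = G p * (G q * \prod_(i | (i != p) && (i != q)) G i).
  move=> G; rewrite (bigD1 p) //= (bigD1 q) //= eq_sym //.
have -> : \sum_(s : {ffun 'I_P -> 'I_m}) ((s p == j)%:R * (s q == k)%:R)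
          = \sum_(s : {ffun 'I_P -> 'I_m}) \prod_i F i (s i).
  apply: eq_bigr => s _; rewrite split2 big1 ?mulr1; last first.
    by move=> i /andP[/negbTE ip /negbTE iq]; rewrite /F ip iq.
  by rewrite /F eqxx qp eqxx.
rewrite sum_ffun_prod split2 -prod_const_m [in RHS]split2.
rewrite {1 2}/F eqxx qp eqxx !sum_ind !mul1r expr2 -mulrA.
congr (_ * (_ * _)); apply: eq_bigr => i /andP[/negbTE ip /negbTE iq]; rewrite /F ip iq.
by rewrite sum_one.
Qed.

Lemma count1 (p : 'I_P) (h : 'I_m -> R) :
  m%:R * \sum_(s : {ffun 'I_P -> 'I_m}) h (s p) = m%:R ^+ P * \sum_j h j.
Proof.
have e : forall s : {ffun 'I_P -> 'I_m}, h (s p) = \sum_j h j * (s p == j)%:R.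
  move=> s; rewrite (bigD1 (s p)) //= eqxx mulr1 big1 ?addr0 //.
  by move=> j /negbTE; rewrite eq_sym => ->; rewrite mulr0.
under eq_bigr do rewrite e.
rewrite exchange_big mulr_sumr mulr_sumr; apply: eq_bigr => j _.
by rewrite -mulr_sumr mulrCA count_ind1 mulrC.
Qed.

Lemma count2 (p q : 'I_P) (H : 'I_m -> 'I_m -> R) : p != q ->
  m%:R ^+ 2 * \sum_(s : {ffun 'I_P -> 'I_m}) H (s p) (s q)
  = m%:R ^+ P * \sum_j \sum_k H j k.
Proof.
move=> pq.
have e : forall s : {ffun 'I_P -> 'I_m}, H (s p) (s q)
    = \sum_j \sum_k H j k * ((s p == j)%:R * (s q == k)%:R).
  move=> s; rewrite (bigD1 (s p)) //= [X in _ + X]big1 ?addr0; last first.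
    move=> j jn; have -> : (s p == j) = false by rewrite eq_sym; exact: negbTE.
    by rewrite big1 // => k _; rewrite mul0r mulr0.
  rewrite (bigD1 (s q)) //= [X in _ + X]big1 ?addr0 ?eqxx ?mulr1 //.
  move=> k kn; have -> : (s q == k) = false by rewrite eq_sym; exact: negbTE.
  by rewrite !mulr0.
under eq_bigr do rewrite e.
rewrite exchange_big mulr_sumr mulr_sumr; apply: eq_bigr => j _.
rewrite exchange_big mulr_sumr mulr_sumr; apply: eq_bigr => k _.
by rewrite -mulr_sumr mulrCA count_ind2 // mulrC.
Qed.

End Cnt.

Theorem lemma3p3 (R : realType) (n d : nat) (A : 'M[R]_(n, d))
  (y : 'I_n -> R) (lam : R) (L : R -> R -> R) (beta rho : R) (P : nat)
  (x : 'cV[R]_(d + d)) :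
  (forall j : 'I_d, (A^T *m A) j j = 1) ->
  0 <= lam ->
  (forall u v, 0 <= L u v) ->
  (forall v u1 u2 (t : R), 0 <= t <= 1 ->
     L (t * u1 + (1 - t) * u2) v <= t * L u1 v + (1 - t) * L u2 v) ->
  (forall v u, derivable (fun t => L t v) u 1) ->
  (forall u w (t : R), nonneg_vec u -> nonneg_vec w -> 0 <= t <= 1 ->
     lassoF A L y lam (t *: u + (1 - t) *: w)
       <= t * lassoF A L y lam u + (1 - t) * lassoF A L y lam w) ->
  0 < beta ->
  (forall u du, nonneg_vec u -> nonneg_vec (u + du) ->
     lassoF A L y lam (u + du)
       <= lassoF A L y lam u + (du^T *m gradF (lassoF A L y lam) u) ord0 ord0
          + beta / 2 * (du^T *m ((dupmx A)^T *m dupmx A) *m du) ord0 ord0) ->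
  is_spectral_radius ((dupmx A)^T *m dupmx A) rho ->
  (0 < P)%N ->
  P%:R < (d + d)%:R / rho + 1 ->
  nonneg_vec x ->
  (forall s : {ffun 'I_P -> 'I_(d + d)},
     nonneg_vec (x + collective (lassoF A L y lam) beta x s)) ->
  (\sum_(s : {ffun 'I_P -> 'I_(d + d)})
      (lassoF A L y lam (x + collective (lassoF A L y lam) beta x s)
         - lassoF A L y lam x)) / ((d + d)%:R ^+ P)
  <= P%:R * ((\sum_(j < d + d)
        (shoot (lassoF A L y lam) beta x j * gradF (lassoF A L y lam) x j ord0
         + beta / 2 * (1 + (P%:R - 1) * rho / (d + d)%:R)
             * (shoot (lassoF A L y lam) beta x j) ^+ 2)) / (d + d)%:R).
Proof.
move=> hdiag hlam hL hLc hLd hFc hbeta hsm hrho P0 hP hx hxs.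
set F := lassoF A L y lam.
set M := (dupmx A)^T *m dupmx A.
set g := gradF F x.
set dl := shoot F beta x.
set Dl := collective F beta x.
have [m0|mpos] := posnP (d + d).
  rewrite big1 ?mul0r; last first.
    by move=> s _; exfalso; case: (s (Ordinal P0)) => k; rewrite m0.
  rewrite big1 ?mul0r ?mulr0 // => j _; exfalso; by case: j => k; rewrite m0.
set mm := ((d + d)%:R : R).
have mmp : 0 < mm by rewrite /mm ltr0n.
have mm0 : mm != 0 by rewrite gt_eqF.
have sM : M^T = M by rewrite /M trmx_mul trmxK.
have Mdiag : forall j, M j j = 1.
  move=> j; case: (splitP j) => k jk.
    have -> : j = lshift d k by apply/val_inj.
    rewrite -(hdiag k) /M [LHS]mxE [RHS]mxE; apply: eq_bigr => i _.
    by rewrite [(_^T) _ _]mxE [(A^T) _ _]mxE /dupmx row_mxEl.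
  have -> : j = rshift d k by apply/val_inj.
  rewrite -(hdiag k) /M [LHS]mxE [RHS]mxE; apply: eq_bigr => i _.
  by rewrite [(_^T) _ _]mxE [(A^T) _ _]mxE /dupmx row_mxEr mxE mulrNN.
have H1 : forall s (h : 'I_(d + d) -> R),
    \sum_k Dl s k 0 * h k = \sum_(p < P) dl (s p) * h (s p).
  move=> s h; under eq_bigr do rewrite mxE big_distrl /= big_mkcond /=.
  rewrite exchange_big; apply: eq_bigr => p _.
  rewrite -big_mkcond /= (big_pred1 (s p)) // => k /=; exact: eq_sym.
have lin : forall s, ((Dl s)^T *m g) 0 0 = \sum_(p < P) dl (s p) * g (s p) 0.
  move=> s; rewrite mxE -(H1 s (fun k => g k 0)); apply: eq_bigr => k _; by rewrite mxE.
have quad : forall s, ((Dl s)^T *m M *m Dl s) 0 0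
    = \sum_(p < P) \sum_(q < P) (dl (s p) * dl (s q) * M (s p) (s q)).
  move=> s.
  have E1 : forall l, ((Dl s)^T *m M) 0 l = \sum_(p < P) dl (s p) * M (s p) l.
    by move=> l; rewrite mxE -(H1 s (fun k => M k l)); apply: eq_bigr => k _; rewrite mxE.
  rewrite mxE; under eq_bigr do rewrite E1 big_distrl /=.
  rewrite exchange_big; apply: eq_bigr => p _.
  transitivity (\sum_k Dl s k 0 * (dl (s p) * M (s p) k)).
    by apply: eq_bigr => k _; rewrite mulrC.
  by rewrite (H1 s (fun k => dl (s p) * M (s p) k)); apply: eq_bigr => q _; rewrite mulrCA mulrA.
have step : forall s, F (x + Dl s) - F x <= \sum_(p < P) dl (s p) * g (s p) 0
    + beta / 2 * \sum_(p < P) \sum_(q < P) (dl (s p) * dl (s q) * M (s p) (s q)).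
  move=> s; have := hsm x (Dl s) hx (hxs s).
  rewrite -/M -/g lin quad => h; rewrite /F; lra.
clearbody Dl.
have T1 : mm * (\sum_(s : {ffun 'I_P -> 'I_(d + d)}) \sum_(p < P) dl (s p) * g (s p) 0)
    = mm ^+ P * (P%:R * \sum_j dl j * g j 0).
  rewrite exchange_big /= mulr_sumr.
  transitivity (\sum_(p < P) mm ^+ P * \sum_j dl j * g j 0).
    by apply: eq_bigr => p _; exact: (count1 p (fun j => dl j * g j 0)).
  rewrite sumr_const card_ord -mulr_natl; ring.
set Q := \sum_j dl j ^+ 2.
set Mq := \sum_j \sum_k dl j * dl k * M j k.
have cnt : forall (p : 'I_P) (c : R), \sum_(q < P | q != p) c = c * (P%:R - 1).
  move=> p c; have h : \sum_(q < P) c = c + \sum_(q < P | q != p) c.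
    by rewrite (bigD1 p).
  rewrite sumr_const card_ord in h.
  transitivity (c *+ P - c); last by rewrite mulrBr mulr1 mulr_natr.
  by rewrite h [c + _]addrC addrK.
have T2 : mm ^+ 2 * (\sum_(s : {ffun 'I_P -> 'I_(d + d)})
      \sum_(p < P) \sum_(q < P) (dl (s p) * dl (s q) * M (s p) (s q)))
    = mm ^+ P * (P%:R * mm * Q + P%:R * (P%:R - 1) * Mq).
  rewrite exchange_big /= mulr_sumr.
  transitivity (\sum_(p < P) (mm ^+ P * (mm * Q) + mm ^+ P * Mq * (P%:R - 1))).
    apply: eq_bigr => p _.
    rewrite exchange_big /= mulr_sumr (bigD1 p) //=; congr (_ + _).
      rewrite expr2 -mulrA (count1 p (fun j => dl j * dl j * M j j)) mulrCA.
      congr (_ * (_ * _)); apply: eq_bigr => j _; by rewrite Mdiag mulr1 expr2.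
    rewrite -(cnt p); apply: eq_bigr => q qp.
    have pq : p != q by rewrite eq_sym.
    exact: (count2 (fun j k => dl j * dl k * M j k) pq).
  rewrite sumr_const card_ord -mulr_natl; ring.
have Hr : forall a, eigenvalue M a -> `|a| <= rho := hrho.2.
clearbody M dl g F.
have HMq : Mq <= rho * Q.
  have := rayleigh sM Hr (\row_j dl j).
  have -> : Bf M (\row_j dl j) (\row_j dl j) = Mq.
    rewrite /Bf mxE /Mq exchange_big /=; apply: eq_bigr => k _.
    rewrite !mxE big_distrl /=; apply: eq_bigr => j _; rewrite !mxE; ring.
  have -> // : Bf 1%:M (\row_j dl j) (\row_j dl j) = Q.
  by rewrite Bf1E; apply: eq_bigr => j _; rewrite mxE.
have Kp : 0 < mm ^+ P by rewrite exprn_gt0.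
have sumF : \sum_(s : {ffun 'I_P -> 'I_(d + d)}) (F (x + Dl s) - F x)
   <= \sum_(s : {ffun 'I_P -> 'I_(d + d)}) \sum_(p < P) dl (s p) * g (s p) 0
      + beta / 2 * \sum_(s : {ffun 'I_P -> 'I_(d + d)})
           \sum_(p < P) \sum_(q < P) (dl (s p) * dl (s q) * M (s p) (s q)).
  rewrite mulr_sumr -big_split /=; apply: ler_sum => s _; exact: step.
have Kinv : 0 <= (mm ^+ P)^-1 by rewrite invr_ge0 ltW.
have h1 := ler_wpM2r Kinv sumF; move: h1 => /= h1.
apply: le_trans h1 _.
set Slin := \sum_(s : {ffun 'I_P -> 'I_(d + d)}) \sum_(p < P) dl (s p) * g (s p) 0.
set Squad := \sum_(s : {ffun 'I_P -> 'I_(d + d)})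
           \sum_(p < P) \sum_(q < P) (dl (s p) * dl (s q) * M (s p) (s q)).
have eSlin : Slin = mm ^+ P * (P%:R * \sum_j dl j * g j 0) / mm.
  apply: (mulfI mm0); rewrite /= T1; field; by move: mm0; rewrite /mm natrD.
have eSquad : Squad = mm ^+ P * (P%:R * mm * Q + P%:R * (P%:R - 1) * Mq) / mm ^+ 2.
  apply: (mulfI (expf_neq0 2 mm0)); rewrite /= T2; field; by move: mm0; rewrite /mm natrD.
have eG : \sum_(j < d + d) dl j * g j ord0 = \sum_j dl j * g j 0 by [].
have eQ : \sum_(j < d + d) dl j ^+ 2 = Q by [].
rewrite big_split /= -mulr_sumr eG eQ eSlin eSquad.
have P1 : 1 <= P%:R :> R by rewrite ler1n.
rewrite -subr_ge0; set Z := (_ - _).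
have -> : Z = beta / 2 * P%:R * (P%:R - 1) * (rho * Q - Mq) / mm ^+ 2.
  rewrite /Z; field; rewrite expf_neq0 // andbT; by move: mm0; rewrite /mm natrD.
apply: divr_ge0; last by rewrite exprn_ge0 // ltW.
apply: mulr_ge0; last by rewrite subr_ge0.
apply: mulr_ge0; last lra.
apply: mulr_ge0; last by rewrite ler0n.
lra.
Qed.
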